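(* Let $X\subseteq\mathbb{R}^k$ be a set of feasible alternatives, $\mathbf{f}=(f_1,f_2):X\to\mathbb{R}^2$ a vector criterion and $Y=\mathbf{f}(X)$. Consider three decision makers $DM_1,DM_2,DM_3$ whose preference relations $\succ_1,\succ_2,\succ_3$ on $\mathbb{R}^2$ are cone relations with cones $K_1,K_2,K_3$, each $K_l$ being a convex pointed cone with $\mathbb{R}^2_+\subseteq K_l$ and $\mathbf{0}_2\notin K_l$. Suppose that vectors $$\mathbf{y}^{(l)}=\begin{pmatrix} w_1^{(l)}\\ -w_2^{(l)}\end{pmatrix},\qquad w_1^{(l)}>0,\ w_2^{(l)}>0,\qquad l=1,2,3,$$ are given with $\mathbf{y}^{(1)}\succ_1\mathbf{0}_2$, $\mathbf{y}^{(2)}\succ_2\mathbf{0}_2$, $\mathbf{y}^{(3)}\succ_3\mathbf{0}_2$, and that no two of these vectors are codirectional. Put $W(l,s)=w_1^{(l)}w_2^{(s)}-w_2^{(l)}w_1^{(s)}$. Then there is exactly one index $s\in\{1,2,3\}$ such that $W(l,s)>0$ and $W(s,k)>0$ for some indices $l,k\in\{1,2,3\}$ with $l\neq k$, $l\neq s$, $k\neq s$; and for this $s$, defining the vector criterion $\mathbf{g}=(g_1,g_2)$ on $X$ by $g_1=f_1$, $g_2=w_2^{(s)}f_1+w_1^{(s)}f_2$, we have $\hat P_{\mathbf{g}}(Y)\subseteq P(Y)$, where $\hat P_{\mathbf{g}}(Y)=\mathbf{f}(P_{\mathbf{g}}(X))$.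
   Context: For $\mathbf{a},\mathbf{b}\in\mathbb{R}^m$, $\mathbf{a}\geq\mathbf{b}$ means $a_i\ge b_i$ for all $i$ and $\mathbf{a}\neq\mathbf{b}$ (Pareto relation); $\mathbb{R}^m_+=\{\mathbf{y}\in\mathbb{R}^m:\mathbf{y}\geq\mathbf{0}_m\}$ (nonnegative orthant without the origin). A binary relation $\mathfrak{R}$ on $\mathbb{R}^m$ is a cone relation with cone $K$ if $\mathbf{y}^{(1)}\mathfrak{R}\,\mathbf{y}^{(2)}\iff \mathbf{y}^{(1)}-\mathbf{y}^{(2)}\in K$ for all $\mathbf{y}^{(1)},\mathbf{y}^{(2)}\in\mathbb{R}^m$. The Pareto set is $P(Y)=\{\mathbf{y}^*\in Y:\ \nexists\,\mathbf{y}\in Y,\ \mathbf{y}\geq\mathbf{y}^*\}$, and for a vector criterion $\mathbf{g}$ on $X$, $P_{\mathbf{g}}(X)=\{\mathbf{x}^*\in X:\ \nexists\,\mathbf{x}\in X,\ \mathbf{g}(\mathbf{x})\geq\mathbf{g}(\mathbf{x}^* )\}$. Two vectors are codirectional if one is a positive multiple of the other. *)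

(* Defs.v *)
From HB Require Import structures.
From mathcomp Require Import all_boot all_order all_algebra.
From mathcomp Require Import boolp classical_sets reals.
Set Implicit Arguments. Unset Strict Implicit. Unset Printing Implicit Defensive.
Import Order.TTheory GRing.Theory Num.Theory.
Local Open Scope ring_scope.
Local Open Scope classical_set_scope.

Section Defs.
Variable R : realType.

Definition pareto_ge (m : nat) (a b : 'rV[R]_m) : Prop :=
  (forall i : 'I_m, b ord0 i <= a ord0 i) /\ a <> b.

Definition orthant_plus (m : nat) : set 'rV[R]_m :=
  [set y | pareto_ge y 0].

Definition is_cone_relation (m : nat) (rel : 'rV[R]_m -> 'rV[R]_m -> Prop)
  (K : set 'rV[R]_m) : Prop :=
  forall y1 y2, rel y1 y2 <-> K (y1 - y2).

Definition is_cone (m : nat) (K : set 'rV[R]_m) : Prop :=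
  forall (a : R) y, 0 < a -> K y -> K (a *: y).

Definition is_convex_cone (m : nat) (K : set 'rV[R]_m) : Prop :=
  is_cone K /\ forall y1 y2, K y1 -> K y2 -> K (y1 + y2).

Definition is_pointed (m : nat) (K : set 'rV[R]_m) : Prop :=
  forall y, y != 0 -> K y -> ~ K (- y).

Definition pareto_set (m : nat) (Y : set 'rV[R]_m) : set 'rV[R]_m :=
  [set ys | Y ys /\ ~ (exists y, Y y /\ pareto_ge y ys)].

Definition pareto_set_g (k m : nat) (g : 'rV[R]_k -> 'rV[R]_m)
  (X : set 'rV[R]_k) : set 'rV[R]_k :=
  [set xs | X xs /\ ~ (exists x, X x /\ pareto_ge (g x) (g xs))].

Definition codirectional (m : nat) (a b : 'rV[R]_m) : Prop :=
  exists c : R, 0 < c /\ a = c *: b.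

Definition vec2 (a b : R) : 'rV[R]_2 :=
  \row_(i < 2) (if i == ord0 then a else b).

Definition comp1 (y : 'rV[R]_2) : R := y ord0 ord0.
Definition comp2 (y : 'rV[R]_2) : R := y ord0 ord_max.

End Defs.

(* Main.v *)
Require Import Defs.
From HB Require Import structures.
From mathcomp Require Import all_boot all_order all_algebra.
From mathcomp Require Import boolp classical_sets reals.
From mathcomp Require Import ring lra.
Import Order.TTheory GRing.Theory Num.Theory.
Local Open Scope ring_scope.
Local Open Scope classical_set_scope.

Definition i0 : 'I_3 := @Ordinal 3 0 isT.
Definition i1 : 'I_3 := @Ordinal 3 1 isT.
Definition i2 : 'I_3 := @Ordinal 3 2 isT.

Lemma ord3 (i : 'I_3) : i = i0 \/ i = i1 \/ i = i2.
Proof.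
case: i => [[|[|[|n]]] Hi].
- by left; apply: val_inj.
- by right; left; apply: val_inj.
- by right; right; apply: val_inj.
- by [].
Qed.

Lemma ord2 (i : 'I_2) : i = ord0 \/ i = ord_max.
Proof.
case: i => [[|[|n]] Hi].
- by left; apply: val_inj.
- by right; apply: val_inj.
- by [].
Qed.

Lemma row2_eq (R : realType) (a b : 'rV[R]_2) :
  a ord0 ord0 = b ord0 ord0 -> a ord0 ord_max = b ord0 ord_max -> a = b.
Proof.
move=> h1 h2; apply/rowP => i; case: (ord2 i) => ->; by [].
Qed.

Lemma ord3_ind (P : 'I_3 -> Prop) : P i0 -> P i1 -> P i2 -> forall i, P i.
Proof. by move=> a b c i; case: (ord3 i) => [->|[->|->]]. Qed.

Ltac pick3 tac := first [exists i0; tac | exists i1; tac | exists i2; tac].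
Ltac solve_s Hg :=
  split; [ apply/Hg; pick3 ltac:(pick3 ltac:(split; [by []|by []|by []|lra|lra]))
         | apply: ord3_ind; move/Hg; case; apply: ord3_ind;
           case; apply: ord3_ind;
           move=> [/eqP n1 /eqP n2 /eqP n3 h1 h2]; try done; exfalso; lra ].

Theorem theorem1 (R : realType) (k : nat) (X : set 'rV[R]_k)
  (f : 'rV[R]_k -> 'rV[R]_2)
  (pref : 'I_3 -> 'rV[R]_2 -> 'rV[R]_2 -> Prop) (K : 'I_3 -> set 'rV[R]_2)
  (w1 w2 : 'I_3 -> R) :
  (forall l, is_cone_relation (pref l) (K l)) ->
  (forall l, is_convex_cone (K l)) ->
  (forall l, is_pointed (K l)) ->
  (forall l, @orthant_plus R 2 `<=` K l) ->
  (forall l, ~ K l 0) ->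
  (forall l, 0 < w1 l) -> (forall l, 0 < w2 l) ->
  (forall l, pref l (vec2 (w1 l) (- w2 l)) 0) ->
  (forall l s, l != s -> ~ codirectional (vec2 (w1 l) (- w2 l)) (vec2 (w1 s) (- w2 s))) ->
  let W := fun l s : 'I_3 => w1 l * w2 s - w2 l * w1 s in
  let good := fun s : 'I_3 =>
    exists l kk : 'I_3, [/\ l != kk, l != s, kk != s, 0 < W l s & 0 < W s kk] in
  exists s : 'I_3,
    [/\ good s,
        (forall s' : 'I_3, good s' -> s' = s) &
        let g := fun x : 'rV[R]_k =>
          vec2 (comp1 (f x)) (w2 s * comp1 (f x) + w1 s * comp2 (f x)) in
        f @` pareto_set_g g X `<=` pareto_set (f @` X)].
Proof.
move=> _ _ _ _ _ Hw1 Hw2 _ Hcod W good.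
pose r := fun i => w2 i / w1 i.
have HW : forall l s, (0 < W l s) = (r l < r s).
  move=> l s; rewrite /W /r.
  have -> : w1 l * w2 s - w2 l * w1 s = w1 l * w1 s * (w2 s / w1 s - w2 l / w1 l).
    by field; apply/andP; split; apply: lt0r_neq0.
  by rewrite pmulr_rgt0 ?mulr_gt0 // subr_gt0.
have Hd : forall l s, l != s -> r l != r s.
  move=> l s ne; apply/negP => /eqP e; apply: (Hcod l s ne).
  exists (w1 l / w1 s); split; first by rewrite divr_gt0.
  have hs := lt0r_neq0 (Hw1 s); have hl := lt0r_neq0 (Hw1 l).
  apply: row2_eq; rewrite !mxE /=.
    by rewrite divfK.
  move: e; rewrite /r => e.
  have -> : w2 l = w2 s / w1 s * w1 l by rewrite -e divfK.
  by rewrite mulrN; congr (- _); field.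
have Hg : forall s, good s <->
   exists l kk : 'I_3, [/\ l != kk, l != s, kk != s, r l < r s & r s < r kk].
  by move=> s; rewrite /good; split => -[l [kk]]; rewrite ?HW => H; exists l, kk;
     rewrite ?HW.
have Hpar : forall s : 'I_3, let g := fun x : 'rV[R]_k =>
          vec2 (comp1 (f x)) (w2 s * comp1 (f x) + w1 s * comp2 (f x)) in
        f @` pareto_set_g g X `<=` pareto_set (f @` X).
  move=> s g y [x [HxX Hnot] <-]; split; first by exists x.
  move=> [y' [[x' Hx' <-] [Hge Hneq]]]; apply: Hnot; exists x'; split=> //.
  have a1 := Hge ord0; have a2 := Hge ord_max.
  have b1 := Hw1 s; have b2 := Hw2 s.
  split.
    move=> i; case: (ord2 i) => -> ; rewrite /g /vec2 !mxE /= /comp1 /comp2; first lra.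
    nra.
  move=> E; apply: Hneq.
  have E1 := congr1 (fun v : 'rV[R]_2 => v ord0 ord0) E.
  have E2 := congr1 (fun v : 'rV[R]_2 => v ord0 ord_max) E.
  move: E1 E2; rewrite /g /vec2 !mxE /= /comp1 /comp2 => E1 E2.
  apply: row2_eq => //.
  rewrite E1 in E2.
  have : w1 s * (f x' ord0 ord_max - f x ord0 ord_max) = 0 by lra.
  move/eqP; rewrite mulf_eq0 (negbTE (lt0r_neq0 b1)) /= subr_eq0 => /eqP //.
have d01 := Hd i0 i1 isT; have d02 := Hd i0 i2 isT; have d12 := Hd i1 i2 isT.
have Hs : exists s, good s /\ forall s', good s' -> s' = s.
  have t01 : r i0 < r i1 \/ r i1 < r i0 by move: d01; rewrite neq_lt => /orP.
  have t02 : r i0 < r i2 \/ r i2 < r i0 by move: d02; rewrite neq_lt => /orP.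
  have t12 : r i1 < r i2 \/ r i2 < r i1 by move: d12; rewrite neq_lt => /orP.
  case: t01 => t01; case: t02 => t02; case: t12 => t12;
  first [ exists i0; solve_s Hg | exists i1; solve_s Hg | exists i2; solve_s Hg | exfalso; lra ].
have [s [gs us]] := Hs.
exists s; split => //.
Qed.
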